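(* Let $Z$ be a metric space, $I=[0,1]$, and $H:I\times I\to Z$ a function such that $H|_{I\times\{0,1\}}$ is continuous. Let $\{(a_i,b_i)\}_i$ be a collection of pairwise disjoint open intervals in $I$ such that $\operatorname{diam}\bigl(H([a_i,b_i]\times I)\bigr)\to0$. Suppose that $H$ is constant on $\{t\}\times I$ for every $t\notin\bigcup_i(a_i,b_i)$, and that $H$ is continuous on each $[a_i,b_i]\times I$. Then $H$ is continuous. *)

(* Defs.v *)
From HB Require Import structures.
From mathcomp Require Import all_boot all_order all_algebra.
From mathcomp Require Import all_classical all_reals all_analysis.
Set Implicit Arguments. Unset Strict Implicit. Unset Printing Implicit Defensive.
Import Order.TTheory GRing.Theory Num.Theory.
Import numFieldNormedType.Exports.
Local Open Scope classical_set_scope.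
Local Open Scope ring_scope.

(** Diameter of a subset of a metric space, as an extended real:
    sup of the distances between pairs of its points (-oo for the empty set). *)
Definition diam {R : realType} {Z : metricType R} (A : set Z) : \bar R :=
  ereal_sup [set (mdist x y)%:E | x in A & y in A].

(* Main.v *)
Require Import Defs.
From HB Require Import structures.
From mathcomp Require Import all_boot all_order all_algebra.
From mathcomp Require Import all_classical all_reals all_analysis.
Import Order.TTheory GRing.Theory Num.Theory.
Import numFieldNormedType.Exports.
Local Open Scope classical_set_scope.
Local Open Scope ring_scope.

Lemma near_finite_forall (J T : Type) (A : set J) (F : set_system T)
  (P : J -> T -> Prop) :
  Filter F -> finite_set A -> (forall i, A i -> F (P i)) ->
  F (fun x => forall i, A i -> P i x).
Proof.
move=> FF /(@finite_seqP {classic J}) [s ->] FP.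
elim: s FP => [|i s IH] FP.
  by apply: filterE => x j.
have h1 : F (P i) by apply: FP; rewrite /= inE eqxx.
have h2 : F (fun x => forall j, [set` s] j -> P j x).
  by apply: IH => j js; apply: FP; rewrite /= inE js orbT.
apply: filterS2 h1 h2 => x Pi Ps j.
by rewrite /= inE => /orP[/eqP->//|/Ps].
Qed.

Lemma near_fst (R : realType) (t s : R) (P : R -> Prop) :
  (\forall x \near t, P x) -> \forall p \near (t, s), P p.1.
Proof.
move=> Pt; exists (P, setT) => //=; first by split=> //; apply: filterT.
by move=> [x y] [].
Qed.

Theorem lemma2p7 (R : realType) (Z : metricType R) (H : R * R -> Z)
  (J : Type) (a b : J -> R) :
  {within (`[0, 1] `*` [set 0; 1]) : set (R * R), continuous H} ->
  (forall i, 0 <= a i /\ a i < b i /\ b i <= 1) ->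
  (forall i j, i <> j -> `]a i, b i[ `&` `]a j, b j[ = set0) ->
  (forall e : R, 0 < e ->
     finite_set [set i | (e%:E <= diam (H @` (`[a i, b i] `*` `[0%R, 1%R])))%E]) ->
  (forall t, t \in `[0, 1] -> ~ (exists i, t \in `]a i, b i[) ->
     forall s s', s \in `[0, 1] -> s' \in `[0, 1] -> H (t, s) = H (t, s')) ->
  (forall i, {within (`[a i, b i] `*` `[0, 1]) : set (R * R), continuous H}) ->
  {within (`[0, 1] `*` `[0, 1]) : set (R * R), continuous H}.
Proof.
move=> Hedge Hab Hdisj Hfin Hconst Hcont.
apply/subspace_continuousP => -[t s] [/= It Is].
apply/metricType_numDomainType.cvgrPdist_lt => e e0.
have I0 : (0:R) \in `[0, 1] by rewrite in_itv /= lexx ler01.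
have [[i ti]|nti] := pselect (exists i, t \in `]a i, b i[).
- have tcc : t \in `[a i, b i] by apply: subset_itv_oo_cc.
  have /subspace_continuousP/(_ (t, s) (conj tcc Is))/metricType_numDomainType.cvgrPdist_lt/(_ e e0) := Hcont i.
  rewrite near_withinE => h1.
  rewrite near_withinE.
  have h2 := @near_fst _ _ s _ (near_in_itvoo ti).
  apply: filterS2 h1 h2 => -[x y] /= + xi [_ Iy].
  by apply; split => //; exact: subset_itv_oo_cc.
have e2 : 0 < e / 2 by rewrite divr_gt0.
have Hts s' : s' \in `[0, 1] -> H (t, s') = H (t, 0).
  by move=> Is'; apply: Hconst.
have hb : \forall x \near t, x \in `[0, 1] -> mdist (H (t, 0)) (H (x, 0)) < e / 2.
  have /subspace_continuousP/(_ (t, 0) (conj It (or_introl erefl)))/metricType_numDomainType.cvgrPdist_lt/(_ _ e2) := Hedge.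
  case=> -[P1 P2] /= [nP1 nP2] sub.
  apply: filterS nP1 => x P1x Ix.
  apply: (sub (x, 0)); first by split => //=; exact: nbhs_singleton nP2.
  by split => //; left.
pose Fs := [set i | ((e / 2)%:E <= diam (H @` (`[a i, b i] `*` `[0%R, 1%R])))%E].
have hF : \forall p \near (t, s), forall i, Fs i -> p.1 \in `]a i, b i[ ->
    p.2 \in `[0, 1] -> mdist (H (t, s)) (H p) < e.
  apply: near_finite_forall => //; first exact: Hfin.
  move=> i _.
  have [tcc|tncc] := boolP (t \in `[a i, b i]).
    have /subspace_continuousP/(_ (t, s) (conj tcc Is))/metricType_numDomainType.cvgrPdist_lt/(_ e e0) := Hcont i.
    rewrite near_withinE => h0; apply: filterS h0 => -[x y] /= h xi Iy.
    apply: h; split => //.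
    exact: subset_itv_oo_cc.
  have : \forall x \near t, (~` `[a i, b i]) x.
    apply: open_nbhs_nbhs; split; first exact/closed_openC/itv_closed.
    exact/negP.
  move=> /(@near_fst _ _ s _); apply: filterS => -[x y] /= nx xi; exfalso; apply: nx.
  exact: subset_itv_oo_cc.
have hb' := @near_fst _ _ s _ hb.
rewrite near_withinE; apply: filterS2 hF hb' => -[x y] /= hF1 hb1.
rewrite /from_subspace => -[Ix Iy].
have [[j xj]|nxj] := pselect (exists j, x \in `]a j, b j[).
  have [Fj|nFj] := pselect (Fs j); first exact: (hF1 j).
  have hd : mdist (H (x, 0)) (H (x, y)) < e / 2.
    rewrite -lte_fin; apply: (@le_lt_trans _ _ (diam (H @` (`[a j, b j] `*` `[0%R, 1%R])))).
      apply: ereal_sup_ubound; exists (H (x, 0)).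
        by exists (x, 0) => //; split => //=; exact: subset_itv_oo_cc.
      by exists (H (x, y)) => //; exists (x, y) => //; split => //=; exact: subset_itv_oo_cc.
    by rewrite ltNge; apply/negP.
  rewrite (Hts s Is); apply: le_lt_trans (metric_triangle _ (H (x, 0)) _) _.
  by rewrite (splitr e); apply: ltrD => //; exact: hb1.
rewrite (Hts s Is) (Hconst x Ix nxj y 0 Iy I0); apply: lt_trans (hb1 Ix) _.
by rewrite ltr_pdivrMr // ltr_pMr // ltr1n.
Qed.
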